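(* Let $e\geqslant 1$ be an integer, $b\geqslant 2$ an even integer, and $a$ a positive integer. Assume there exist an $(e,b)$-happy number $l$ and a positive integer $h'$ with $h'\equiv a\pmod{b-1}$ such that $l\equiv T_{e,b}(h')\pmod{b-1}$. Then there exists an $(e,b)$-happy number $h$ with $h\equiv a\pmod{b-1}$.
   Context: For a positive integer $n=\sum_{j=0}^k a_j b^j$ with $0\leqslant a_j<b$, $T_{e,b}(n)=\sum_{j=0}^k a_j^e$; $T_{e,b}^r$ is the $r$-th iterate, $T_{e,b}^0(n)=n$. A positive integer $n$ is $(e,b)$-happy if $T_{e,b}^r(n)=1$ for some $r\geqslant 0$. *)

(* Defs.v *)
From mathcomp Require Import all_boot.
Set Implicit Arguments. Unset Strict Implicit. Unset Printing Implicit Defensive.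

(* Sum of e-th powers of the base-b digits of n, computed with fuel k.
   With k >= number of digits (e.g. k = n when b >= 2) this is exact. *)
Fixpoint digit_pow_sum (k e b n : nat) : nat :=
  match k with
  | 0 => 0
  | k'.+1 => if n == 0 then 0 else (n %% b) ^ e + digit_pow_sum k' e b (n %/ b)
  end.

Definition T (e b n : nat) : nat := digit_pow_sum n e b n.

Definition happy (e b n : nat) : Prop := 0 < n /\ exists r : nat, iter r (T e b) n = 1.

(* Main.v *)
Require Import Defs.
From mathcomp Require Import all_boot.
From mathcomp Require Import zify.

Lemma dps_fuel e b n k1 k2 : 2 <= b -> n <= k1 -> n <= k2 ->
  digit_pow_sum k1 e b n = digit_pow_sum k2 e b n.
Proof.
move=> b2; elim: k1 n k2 => [|k1 IH] n [|k2] /= h1 h2.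
- by [].
- have -> : n = 0 by lia. by [].
- have -> : n = 0 by lia. by [].
- case: (n =P 0) => // /eqP n0.
  have lt : n %/ b < n by apply: ltn_Pdiv => //; lia.
  by rewrite (IH _ k2) //; lia.
Qed.

Lemma T_step e b n d : 1 <= e -> 2 <= b -> d < b ->
  T e b (n * b + d) = d ^ e + T e b n.
Proof.
move=> e1 b2 db; rewrite /T.
case E: (n * b + d) => [|k].
  have -> : d = 0 by lia. have -> : n = 0 by lia.
  by rewrite /= exp0n.
rewrite /= -E.
have -> : (n * b + d) %% b = d by rewrite modnMDl modn_small.
have -> : (n * b + d) %/ b = n by rewrite divnMDl ?divn_small ?addn0 //; lia.
congr (_ + _); apply: dps_fuel => //; nia.
Qed.

Lemma T_shift e b n k : 1 <= e -> 2 <= b ->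
  T e b (iter k (fun x => x * b) n) = T e b n.
Proof.
move=> e1 b2; elim: k => [|k IH] //=.
rewrite -[_ * b]addn0 T_step //; last lia. by case: e e1 IH => // e0 _ IH; rewrite expnS mul0n.
Qed.

Lemma modb1 b x : 0 < b -> x * b = x %[mod b.-1].
Proof.
case: b => [|b] //= _.
by rewrite mulnS addnC modnMDl.
Qed.

Lemma iter_mod b l k : 0 < b -> iter k (fun x => x * b) l = l %[mod b.-1].
Proof.
move=> b0; elim: k => [|k IH] //=. by rewrite modb1.
Qed.

Lemma iter_ge b l k : 2 <= b -> 1 <= l -> k + l <= iter k (fun x => x * b) l.
Proof.
move=> b2 l1; elim: k => [|k IH] //=; nia.
Qed.

Fixpoint f b h m := if m is m'.+1 then f b h m' * b + 1 else h.

Lemma T_f e b h m : 1 <= e -> 2 <= b -> T e b (f b h m) = T e b h + m.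
Proof.
move=> e1 b2; elim: m => [|m IH] /=; first by rewrite addn0.
by rewrite T_step // exp1n IH; lia.
Qed.

Lemma f_mod b h m : 0 < b -> f b h m = h + m %[mod b.-1].
Proof.
move=> b0; elim: m => [|m IH] /=; first by rewrite addn0.
rewrite -modnDml modb1 // modnDml -modnDml. rewrite IH modnDml; congr (_ %% _); lia.
Qed.

Lemma f_pos b h m : 0 < h -> 0 < f b h m.
Proof. by move=> h0; case: m => //= m; rewrite addn1. Qed.

Theorem lemma2p5 (e b a : nat) :
  1 <= e -> 2 <= b -> ~~ odd b -> 0 < a ->
  (exists l h' : nat, happy e b l /\ 0 < h' /\ h' = a %[mod b.-1] /\
                      l = T e b h' %[mod b.-1]) ->
  exists h : nat, happy e b h /\ h = a %[mod b.-1].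
Proof.
move=> e1 b2 _ a0 [l [h' [[l0 [r Hr]] [h0 [Ha Hl]]]]].
set L := iter (T e b h') (fun x => x * b) l.
have LT : T e b L = T e b l by rewrite T_shift.
have Lge : T e b h' <= L by have := @iter_ge b l (T e b h') b2 l0; rewrite -/L; lia.
have Lm : L = T e b h' %[mod b.-1] by rewrite iter_mod //; lia.
set m := L - T e b h'.
have m0 : m %% b.-1 = 0.
  apply/eqP; rewrite -/(dvdn _ _) -eqn_mod_dvd //; exact/eqP.
exists (f b h' m); split.
  split; first exact: f_pos.
  exists r.+2.
  rewrite iterSr T_f // subnKC //.
  rewrite iterSr LT -iterSr iterS Hr.
  by rewrite /T /= modn_small // exp1n.
rewrite f_mod; last lia. by rewrite -modnDmr m0 addn0.
Qed.
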